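(* Let $n\ge 1$ and let $A = \begin{bmatrix} 0_n & I_n \\ 0_n & 0_n \end{bmatrix}$, $C = \begin{bmatrix} I_n & 0_n \end{bmatrix}$, $E = \begin{bmatrix} 0_n \\ I_n \end{bmatrix}$. Let $\kappa,\gamma>0$, and suppose $P\in\mathbb{R}^{2n\times 2n}$ is symmetric positive definite and $W\in\mathbb{R}^{2n\times n}$ is such that $$\begin{bmatrix} \Lambda & PE \\ E^\top P & -\gamma^2 I_n\end{bmatrix} < 0,\qquad \Lambda = P(\kappa I_{2n}+A) + (\kappa I_{2n}+A)^\top P + I_{2n} - WC - C^\top W^\top.$$ Partition $P = \begin{bmatrix} P_{11} & P_{12} \\ P_{12}^\top & P_{22}\end{bmatrix}$ with $P_{11},P_{12},P_{22}\in\mathbb{R}^{n\times n}$. Then $P_{11}>0$, $P_{22}>0$, and $P_{12}$ is non-singular and Hurwitz.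
   Context: $>0$ / $<0$ for symmetric matrices denote positive / negative definiteness. A square matrix is Hurwitz if all its eigenvalues have strictly negative real part. *)

(* Defs.v *)
(* matrices over an abstract real closed field R (covers the reals);
   eigenvalues live in the algebraic closure R[i] (mathcomp-real-closed complex). *)
From HB Require Import structures.
From mathcomp Require Import all_boot all_order all_algebra.
From mathcomp Require Import complex.
Set Implicit Arguments. Unset Strict Implicit. Unset Printing Implicit Defensive.
Import Order.TTheory GRing.Theory Num.Theory.
Local Open Scope ring_scope.

Definition posdef (R : realFieldType) (m : nat) (M : 'M[R]_m) : Prop :=
  M^T = M /\ forall x : 'cV[R]_m, x != 0 -> 0 < (x^T *m M *m x) 0 0.

Definition negdef (R : realFieldType) (m : nat) (M : 'M[R]_m) : Prop :=
  M^T = M /\ forall x : 'cV[R]_m, x != 0 -> (x^T *m M *m x) 0 0 < 0.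

Definition eigenvalueC (R : rcfType) (m : nat) (M : 'M[R]_m) (z : R[i]) : Prop :=
  root (char_poly (map_mx (fun x : R => (x%:C)%C) M)) z.

Definition hurwitz (R : rcfType) (m : nat) (M : 'M[R]_m) : Prop :=
  forall z : R[i], eigenvalueC M z -> complex.Re z < 0.

Definition Amat (R : rcfType) (n : nat) : 'M[R]_(n + n) :=
  block_mx 0 1%:M 0 0.
Definition Cmat (R : rcfType) (n : nat) : 'M[R]_(n, n + n) := row_mx 1%:M 0.
Definition Emat (R : rcfType) (n : nat) : 'M[R]_(n + n, n) := col_mx 0 1%:M.

Definition Lambda (R : rcfType) (n : nat) (kappa : R) (P : 'M[R]_(n + n))
    (W : 'M[R]_(n + n, n)) : 'M[R]_(n + n) :=
  P *m (kappa%:M + Amat R n) + (kappa%:M + Amat R n)^T *m P + 1%:M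
  - W *m Cmat R n - (Cmat R n)^T *m W^T.

Definition LMI (R : rcfType) (n : nat) (kappa gamma : R) (P : 'M[R]_(n + n))
    (W : 'M[R]_(n + n, n)) : 'M[R]_(n + n + n) :=
  block_mx (Lambda kappa P W) (P *m Emat R n)
           ((Emat R n)^T *m P) (- (gamma ^+ 2)%:M).

(* Main.v *)
Require Import Defs.
From HB Require Import structures.
From mathcomp Require Import all_boot all_order all_algebra.
From mathcomp Require Import complex.
From mathcomp Require Import lra.
Import Order.TTheory GRing.Theory Num.Theory.
Local Open Scope ring_scope.
Lemma qf_ul (R : rcfType) n (P : 'M[R]_(n + n)) (x : 'cV_n) :
  (x^T *m ulsubmx P *m x) 0 0 = ((col_mx x 0)^T *m P *m col_mx x 0) 0 0.
Proof.
rewrite -{2}(submxK P) !tr_col_mx !trmx0 !mul_row_block !mul_row_col.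
by rewrite !mul0mx !mulmx0 !addr0.
Qed.
Lemma qf_dr (R : rcfType) n (P : 'M[R]_(n + n)) (x : 'cV_n) :
  (x^T *m drsubmx P *m x) 0 0 = ((col_mx 0 x)^T *m P *m col_mx 0 x) 0 0.
Proof.
rewrite -{2}(submxK P) !tr_col_mx !trmx0 !mul_row_block !mul_row_col.
by rewrite !mul0mx !mulmx0 !add0r.
Qed.

Lemma posdef_blocks (R : rcfType) n (P : 'M[R]_(n + n)) :
  posdef P -> posdef (ulsubmx P) /\ posdef (drsubmx P).
Proof.
move=> [Ps Pp]; split; split.
- by rewrite trmx_ulsub Ps.
- move=> x x0; rewrite qf_ul; apply: Pp.
  by rewrite col_mx_eq0 negb_and x0.
- by rewrite trmx_drsub Ps.
- move=> x x0; rewrite qf_dr; apply: Pp.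
  by rewrite col_mx_eq0 negb_and x0 orbT.
Qed.
Lemma key (R : rcfType) (n : nat) (kappa gamma : R)
    (P : 'M[R]_(n + n)) (W : 'M[R]_(n + n, n)) :
  0 < kappa -> posdef P -> negdef (LMI kappa gamma P W) ->
  forall x : 'cV_n, x != 0 -> (x^T *m ursubmx P *m x) 0 0 < 0.
Proof.
move=> k0 [Ps Pp] [_ Ln] x x0.
set y : 'cV_(n + n) := col_mx 0 x.
set u : 'cV_(n + n) := col_mx x 0.
have y0 : y != 0 by rewrite col_mx_eq0 negb_and x0 orbT.
have := Ln (col_mx y 0); rewrite col_mx_eq0 negb_and y0 => /(_ isT).
rewrite /LMI tr_col_mx trmx0 mul_row_block mul_row_col !mul0mx !mulmx0 !addr0.
set K := kappa%:M + Amat R n.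
have Cy : Cmat R n *m y = 0 by rewrite /Cmat mul_row_col mul0mx mulmx0 addr0.
have Ky : K *m y = kappa *: y + u.
  by rewrite /K mulmxDl mul_scalar_mx /Amat mul_block_col ?mul0mx ?mulmx0 ?mul1mx ?addr0 ?add0r.
have E1 : y^T *m (P *m K) *m y = kappa *: (y^T *m P *m y) + y^T *m P *m u.
  by rewrite -!mulmxA Ky mulmxDr -scalemxAr mulmxDr -scalemxAr.
have E2 : y^T *m (K^T *m P) *m y = kappa *: (y^T *m P *m y) + u^T *m P *m y.
  by rewrite !mulmxA -trmx_mul Ky linearD linearZ /= mulmxDl -!scalemxAl mulmxDl -scalemxAl.
have E3 : y^T *m (W *m Cmat R n) *m y = 0 by rewrite -!mulmxA Cy !mulmx0.
have E4 : y^T *m ((Cmat R n)^T *m W^T) *m y = 0.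
  by rewrite !mulmxA -trmx_mul Cy trmx0 !mul0mx.
have E5 : (y^T *m P *m u) 0 0 = (u^T *m P *m y) 0 0.
  have tr00 : forall M : 'M[R]_1, M^T 0 0 = M 0 0 by move=> M; rewrite mxE.
  by rewrite -tr00 !trmx_mul Ps trmxK mulmxA.
have E6 : (u^T *m P *m y) 0 0 = (x^T *m ursubmx P *m x) 0 0.
  rewrite /u /y -{1}(submxK P) !tr_col_mx !trmx0 !mul_row_block !mul_row_col.
  rewrite ?mul0mx ?mulmx0 ?addr0 ?add0r; reflexivity.
have E7 : 0 <= (y^T *m 1%:M *m y) 0 0.
  rewrite mulmx1 mxE; apply: sumr_ge0 => i _; rewrite mxE -expr2; exact: sqr_ge0.
have Hq := Pp y y0.
rewrite /Lambda -/K; clearbody K.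
rewrite !(mulmxDr, mulmxN) !(mulmxDl, mulNmx) E1 E2 E3 E4 !oppr0 !addr0.
move: E5 E6 E7 Hq; rewrite -/u.
move: (y^T *m P *m y) (y^T *m P *m u) (u^T *m P *m y) (y^T *m 1%:M *m y) => A B C D.
rewrite !mxE => -> -> E7 Hq.
set q := (x^T *m ursubmx P *m x) 0 0.
rewrite -!/q. 
move=> H. have : 0 < kappa * A 0 0 by apply: mulr_gt0.
move: H; set a := kappa * A 0 0; move=> H Ha.
lra.
Qed.
Lemma neg_unit (R : rcfType) n (M : 'M[R]_n) :
  (forall x : 'cV_n, x != 0 -> (x^T *m M *m x) 0 0 < 0) -> M \in unitmx.
Proof.
move=> H; rewrite -row_free_unit; apply: inj_row_free => v Hv.
apply/eqP; apply: contraT => v0.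
have := H v^T; rewrite trmxK trmx_eq0 => /(_ v0).
by rewrite Hv mul0mx mxE ltxx.
Qed.

Lemma Re_sum (R : rcfType) (I : finType) (F : I -> R[i]) :
  complex.Re (\sum_i F i) = \sum_i complex.Re (F i).
Proof. by elim/big_rec2: _ => // i a b _ <-; case: (F i); case: b. Qed.
Lemma Im_sum (R : rcfType) (I : finType) (F : I -> R[i]) :
  complex.Im (\sum_i F i) = \sum_i complex.Im (F i).
Proof. by elim/big_rec2: _ => // i a b _ <-; case: (F i); case: b. Qed.
Lemma ReM (R : rcfType) (w u : R[i]) : complex.Re (w * u) = complex.Re w * complex.Re u - complex.Im w * complex.Im u.
Proof. by case: w => p q; case: u => r s. Qed.
Lemma ImM (R : rcfType) (w u : R[i]) : complex.Im (w * u) = complex.Re w * complex.Im u + complex.Im w * complex.Re u.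
Proof. by case: w => p q; case: u => r s. Qed.

Lemma neg_qf (R : rcfType) n (M : 'M[R]_n) (a : 'rV_n) :
  (forall x : 'cV_n, x != 0 -> (x^T *m M *m x) 0 0 < 0) ->
  (a *m M *m a^T) 0 0 <= 0 /\ (a != 0 -> (a *m M *m a^T) 0 0 < 0).
Proof.
move=> H; have H' : a != 0 -> (a *m M *m a^T) 0 0 < 0.
  by move=> a0; have := H a^T; rewrite trmxK trmx_eq0; apply.
split=> //; have [->|a0] := eqVneq a 0; last by apply/ltW/H'.
by rewrite !mul0mx mxE.
Qed.

Lemma neg_hurwitz (R : rcfType) n (M : 'M[R]_n) :
  (forall x : 'cV_n, x != 0 -> (x^T *m M *m x) 0 0 < 0) -> hurwitz M.
Proof.
move=> H z; rewrite /eigenvalueC -eigenvalue_root_char => /eigenvalueP [v Hv v0].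
set a : 'rV[R]_n := \row_j complex.Re (v 0 j).
set b : 'rV[R]_n := \row_j complex.Im (v 0 j).
have Ea : a *m M = complex.Re z *: a - complex.Im z *: b.
  apply/rowP => j; have := congr1 (fun w : 'rV[R[i]]_n => complex.Re (w 0 j)) Hv.
  rewrite !mxE Re_sum /= => E; rewrite -ReM -E.
  apply: eq_bigr => i _; rewrite !mxE ReM /=; lra.
have Eb : b *m M = complex.Re z *: b + complex.Im z *: a.
  apply/rowP => j; have := congr1 (fun w : 'rV[R[i]]_n => complex.Im (w 0 j)) Hv.
  rewrite !mxE Im_sum /= => E; rewrite -ImM -E.
  apply: eq_bigr => i _; rewrite !mxE ImM /=; lra.
have ab : (a != 0) || (b != 0).
  apply: contraT; rewrite negb_or !negbK => /andP [/eqP a0 /eqP b0].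
  suff : v == 0 by rewrite (negbTE v0).
  apply/eqP/rowP => j.
  have := congr1 (fun w : 'rV[R]_n => w 0 j) a0.
  have := congr1 (fun w : 'rV[R]_n => w 0 j) b0.
  rewrite !mxE; case: (v 0 j) => p q /= -> ->; by [].
have [qa1 qa2] := @neg_qf _ _ M a H.
have [qb1 qb2] := @neg_qf _ _ M b H.
have Hs : (a *m M *m a^T) 0 0 + (b *m M *m b^T) 0 0 =
   complex.Re z * ((a *m a^T) 0 0 + (b *m b^T) 0 0).
  rewrite Ea Eb mulmxBl mulmxDl -!scalemxAl !mxE.
  have -> : \sum_j b 0 j * a^T j 0 = \sum_j a 0 j * b^T j 0.
    by apply: eq_bigr => i _; rewrite !mxE mulrC.
  lra.
have Sa : 0 <= (a *m a^T) 0 0.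
  rewrite mxE; apply: sumr_ge0 => i _; rewrite [_^T _ _]mxE -expr2; exact: sqr_ge0.
have Sb : 0 <= (b *m b^T) 0 0.
  rewrite mxE; apply: sumr_ge0 => i _; rewrite [_^T _ _]mxE -expr2; exact: sqr_ge0.
have Hlt : (a *m M *m a^T) 0 0 + (b *m M *m b^T) 0 0 < 0.
  case/orP: ab => [/qa2|/qb2]; lra.
rewrite ltNge; apply/negP => hz.
have : 0 <= complex.Re z * ((a *m a^T) 0 0 + (b *m b^T) 0 0).
  by apply: mulr_ge0 => //; apply: addr_ge0.
lra.
Qed.

Theorem corollary1 (R : rcfType) (n : nat) (kappa gamma : R)
    (P : 'M[R]_(n + n)) (W : 'M[R]_(n + n, n)) :
  (0 < n)%N -> 0 < kappa -> 0 < gamma ->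
  posdef P -> negdef (LMI kappa gamma P W) ->
  posdef (ulsubmx P) /\ posdef (drsubmx P) /\
  ursubmx P \in unitmx /\ hurwitz (ursubmx P).
Proof.
move=> _ k0 _ HP HL.
have [H1 H2] := @posdef_blocks R n P HP.
have K := @key R n kappa gamma P W k0 HP HL.
by split; [|split; [|split]] => //; [apply: neg_unit | apply: neg_hurwitz].
Qed.
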